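(* Let $\pi \in S_{n+1}$ have no fixed points. Then $\pi$ has no stretching pairs if and only if there exists $\ell \in [n]$ such that $\mathrm{Exc}(\pi) = \{1,\dots,\ell\}$.
   Context: For $\pi \in S_{n+1}$, $\mathrm{Exc}(\pi) = \{i \in [n] : \pi(i) > i\}$ is the excedance set. A pair $1\le i<j\le n+1$ is a stretching pair of $\pi$ if $\pi(i) < i < j < \pi(j)$. *)

(* Defs.v *)
From mathcomp Require Import all_boot all_fingroup.
Set Implicit Arguments. Unset Strict Implicit. Unset Printing Implicit Defensive.

(* Permutations of [n+1] = {1,...,n+1} are modelled as 'S_(n.+1), acting on
   'I_(n.+1) = {0,...,n}; the element i : 'I_(n.+1) stands for i+1.
   Comparisons are invariant under this shift. *)

Definition Exc n (pi : 'S_(n.+1)) : {set 'I_(n.+1)} := [set i : 'I_(n.+1) | i < pi i].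

Definition stretching_pair n (pi : 'S_(n.+1)) (i j : 'I_(n.+1)) : bool :=
  [&& pi i < i, i < j & j < pi j].

Definition fixed_point_free n (pi : 'S_(n.+1)) : bool :=
  [forall i : 'I_(n.+1), pi i != i].

(* Main.v *)
Require Import Defs.
From mathcomp Require Import all_boot all_fingroup.

Theorem mainTheorem7 (n : nat) (pi : 'S_(n.+1)) :
  fixed_point_free pi ->
  ((forall i j : 'I_(n.+1), ~~ stretching_pair pi i j) <->
   (exists l : nat, [/\ 1 <= l, l <= n & Exc pi = [set i : 'I_(n.+1) | i < l]])).
Proof.
move=> /forallP ffp; split.
- move=> H.
  have dc : forall i j : 'I_n.+1, i < j -> j \in Exc pi -> i \in Exc pi.
    move=> i j ij; rewrite !inE => hj; apply/negPn/negP => hi.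
    have ne : (pi i : nat) != i.
      by apply/eqP => e; move/eqP: (ffp i); apply; apply: val_inj.
    have lt : pi i < i by rewrite ltn_neqAle ne leqNgt.
    by have := H i j; rewrite /stretching_pair lt ij hj.
  have ex : exists k, (k <= n) && (inord k \notin Exc pi).
    exists n; rewrite leqnn /= inE inordK // -leqNgt -ltnS; exact: ltn_ord.
  case: (ex_minnP ex) => l /andP[ln hl] lmin.
  exists l; split => //.
  + rewrite lt0n; apply/eqP => l0; move: hl; rewrite l0 inE -leqNgt inordK //.
    rewrite leqn0 => /eqP e; move/eqP: (ffp (inord 0)); apply; apply: val_inj.
    by rewrite /= e inordK.
  + apply/setP => i; rewrite [in RHS]inE; case: (ltnP i l) => il.
    * apply/negPn/negP => hi; have := lmin i.
      by rewrite -ltnS ltn_ord inord_val hi => /(_ isT); rewrite leqNgt il.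
    * apply/negP => hi; move: il; rewrite leq_eqVlt => /orP[/eqP e|lt].
      - move: hl; suff -> : inord l = i by rewrite hi.
        by apply: val_inj; rewrite /= inordK // ltnS.
      - have := dc (inord l) i; rewrite inordK ?ltnS // lt hi => /(_ isT isT).
        by rewrite (negbTE hl).
- case => l [l1 ln E] i j; rewrite /stretching_pair.
  apply/negP => /and3P[a b c].
  have : j \in Exc pi by rewrite inE.
  rewrite E inE => jl.
  have : i \in Exc pi by rewrite E inE (ltn_trans b jl).
  rewrite inE => d.
  by have := ltn_trans a d; rewrite ltnn.
Qed.
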